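(* Let $\mathcal{P}\subset K[x_1,\ldots,x_n]$ be a chordal polynomial set with $x_1<\cdots<x_n$ as a perfect elimination ordering. For each $i=1,\ldots,n$ with $\mathcal{P}^{(i)}\neq\emptyset$, let $T_i\in K[x_1,\ldots,x_n]$ be a polynomial with $\mathrm{lv}(T_i)=x_i$ and $\mathrm{supp}(T_i)\subseteq \mathrm{supp}(\mathcal{P}^{(i)})$. For $i$ with $\mathcal{P}^{(i)}=\emptyset$, $T_i$ is absent. Then $\mathcal{T}=[T_1,\ldots,T_n]$, with the absent entries omitted, is a triangular set and $G(\mathcal{T})\subseteq G(\mathcal{P})$. Moreover, if $\mathrm{supp}(T_i)=\mathrm{supp}(\mathcal{P}^{(i)})$ for every $i$ with $\mathcal{P}^{(i)}\neq\emptyset$, then $G(\mathcal{T})=G(\mathcal{P})$.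
   Context: Let $K$ be a field and $K[x_1,\ldots,x_n]$ the polynomial ring, with the variables ordered $x_1<\cdots<x_n$. For a polynomial $F$, $\mathrm{supp}(F)$ is the set of variables effectively appearing in $F$. For a set of polynomials $\mathcal{P}$, $\mathrm{supp}(\mathcal{P})=\bigcup_{F\in\mathcal{P}}\mathrm{supp}(F)$. For a nonconstant $F$, $\mathrm{lv}(F)$ is the greatest variable in $\mathrm{supp}(F)$. For a polynomial set $\mathcal{P}$ and $1\le i\le n$, $\mathcal{P}^{(i)}=\{P\in\mathcal{P}:\mathrm{lv}(P)=x_i\}$; constants belong to no $\mathcal{P}^{(i)}$. The associated graph $G(\mathcal{P})$ is the undirected graph whose vertex set is $\mathrm{supp}(\mathcal{P})$, with an edge between distinct $x_i,x_j$ iff some $F\in\mathcal{P}$ has $x_i,x_j\in\mathrm{supp}(F)$. For graphs, $G\subseteq G'$ means that $G$ is a subgraph of $G'$, i.e. both the vertex set and the edge set are contained. An ordering of the vertices of a graph is a perfect elimination ordering if, for every vertex $v$, the set consisting of $v$ and all neighbours of $v$ smaller than $v$ is a clique. A polynomial set $\mathcal{P}$ is called chordal with $x_1<\cdots<x_n$ as a perfect elimination ordering if the restriction of this ordering to $\mathrm{supp}(\mathcal{P})$ is a perfect elimination ordering of $G(\mathcal{P})$. A triangular set is an ordered set $[T_1,\ldots,T_r]$ of nonconstant polynomials with $\mathrm{lv}(T_1)<\cdots<\mathrm{lv}(T_r)$. *)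

(* Defs.v *)
(* Variable x_(i+1) is represented by i : 'I_n, and the
   order x_1 < ... < x_n is the natural order of 'I_n. *)
From Stdlib Require List ClassicalEpsilon.
From HB Require Import structures.
From mathcomp Require Import all_boot all_order all_algebra.
Set Implicit Arguments. Unset Strict Implicit. Unset Printing Implicit Defensive.
Import GRing.Theory.
Local Open Scope ring_scope.

Definition mpoly (n : nat) (K : fieldType) :=
  { f : n.-tuple nat -> K | exists s : seq (n.-tuple nat), forall m, f m != 0 -> m \in s }.

Definition coef n K (F : mpoly n K) (m : n.-tuple nat) : K := proj1_sig F m.

Definition supp n K (F : mpoly n K) (i : 'I_n) : Prop :=
  exists m, coef F m != 0 /\ (0 < tnth m i)%N.

Definition suppSet n K (P : mpoly n K -> Prop) (i : 'I_n) : Prop :=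
  exists F, P F /\ supp F i.

Definition is_lv n K (F : mpoly n K) (i : 'I_n) : Prop :=
  supp F i /\ forall j, supp F j -> (j <= i)%N.

Definition nonconstant n K (F : mpoly n K) : Prop := exists i, supp F i.

Definition Plv n K (P : mpoly n K -> Prop) (i : 'I_n) : mpoly n K -> Prop :=
  fun F => P F /\ is_lv F i.

Record graph (n : nat) := Graph { gV : 'I_n -> Prop; gE : 'I_n -> 'I_n -> Prop }.

Definition assoc_graph n K (P : mpoly n K -> Prop) : graph n :=
  Graph (suppSet P)
        (fun u v => u <> v /\ exists F, P F /\ supp F u /\ supp F v).

Definition subgraph n (G G' : graph n) : Prop :=
  (forall v, gV G v -> gV G' v) /\ (forall u v, gE G u v -> gE G' u v).

Definition graph_eq n (G G' : graph n) : Prop := subgraph G G' /\ subgraph G' G.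

Definition is_peo n (G : graph n) : Prop :=
  forall v, gV G v ->
    let C := fun u => u = v \/ (gV G u /\ gE G u v /\ (u < v)%N) in
    forall a b, C a -> C b -> a <> b -> gE G a b.

Definition chordal n K (P : mpoly n K -> Prop) : Prop := is_peo (assoc_graph P).

Definition lv_lt n K (F G : mpoly n K) : Prop :=
  exists i j, is_lv F i /\ is_lv G j /\ (i < j)%N.

Definition triangular_set n K (s : list (mpoly n K)) : Prop :=
  List.Forall (@nonconstant n K) s /\ List.ForallOrdPairs (@lv_lt n K) s.

Definition pb (Q : Prop) : bool :=
  if ClassicalEpsilon.excluded_middle_informative Q then true else false.

Definition Tlist n K (P : mpoly n K -> Prop) (T : 'I_n -> mpoly n K) : list (mpoly n K) :=
  [seq T i | i <- enum 'I_n & pb (exists F, Plv P i F)].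

Definition list_set n K (s : list (mpoly n K)) : mpoly n K -> Prop :=
  fun F => List.In F s.

(* Main.v *)
Require Import Defs.
From mathcomp Require Import all_boot all_order all_algebra.
From Stdlib Require Import Classical.
From mathcomp Require Import zify.

Lemma in_mapfilter (A : eqType) (B : Type) (f : A -> B) (p : pred A) (s : seq A) x :
  List.In x [seq f i | i <- s & p i] <-> exists i, i \in s /\ p i /\ x = f i.
Proof.
elim: s x => [|a s IH] x /=; first by split=> // [[i []]].
case pa: (p a) => /=.
  split.
    case=> [<-|/IH [i [si [pi ->]]]]; first by exists a; rewrite mem_head.
    by exists i; rewrite in_cons si orbT.
  move=> [i [+ [pi ->]]]; rewrite in_cons => /orP [/eqP->|si]; first by left.
  by right; apply/IH; exists i.
rewrite IH; split=> [[i [si [pi ->]]]|[i [+ [pi ->]]]]; first by exists i; rewrite in_cons si orbT.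
rewrite in_cons => /orP [/eqP Ei|si]; first by rewrite Ei pa in pi.
by exists i.
Qed.

Lemma ordpairs_mapfilter (B : Type) (R : B -> B -> Prop) n (f : 'I_n -> B)
   (p : pred 'I_n) (s : seq 'I_n) :
  sorted (fun i j : 'I_n => (i < j)%N) s ->
  (forall i j : 'I_n, p i -> p j -> (i < j)%N -> R (f i) (f j)) ->
  List.ForallOrdPairs R [seq f i | i <- s & p i].
Proof.
move=> + HR; elim: s => [|a s IH] /=; first by constructor.
move=> Hs.
have Hs' := path_sorted Hs.
have Hall : all (fun j : 'I_n => (a < j)%N) s.
  apply: (order_path_min (leT := fun i j : 'I_n => (i < j)%N)) => //.
  by move=> x y z; apply: ltn_trans.
case pa: (p a) => /=; last exact: IH.
constructor; last exact: IH.
apply/List.Forall_forall => x /in_mapfilter [i [si [pi ->]]].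
apply: HR => //; exact: (allP Hall).
Qed.

Lemma exists_lv n K (F : mpoly n K) j : supp F j -> exists i, is_lv F i.
Proof.
move: j; suff: forall k (j : 'I_n), (n - j <= k)%N -> supp F j -> exists i, is_lv F i.
  by move=> H j; apply: (H n) => //; rewrite leq_subr.
elim=> [|k IH] j Hk Hj.
  have := ltn_ord j; lia.
case: (classic (forall j', supp F j' -> (j' <= j)%N)) => [Hm|Hm]; first by exists j.
move/not_all_ex_not: Hm => [j' Hjj]; have [Hj' ltj] := imply_to_and _ _ Hjj; move/negP: ltj; rewrite -ltnNge => ltj.
apply: (IH j') => //.
have := ltn_ord j'; lia.
Qed.

Lemma pbP (Q : Prop) : pb Q <-> Q.
Proof. by rewrite /pb; case: ClassicalEpsilon.excluded_middle_informative. Qed.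

Theorem proposition3p1 (K : fieldType) (n : nat) (P : mpoly n K -> Prop)
    (T : 'I_n -> mpoly n K) :
  chordal P ->
  (forall i : 'I_n, (exists F, Plv P i F) ->
     is_lv (T i) i /\ (forall j, supp (T i) j -> suppSet (Plv P i) j)) ->
  triangular_set (Tlist P T) /\
  subgraph (assoc_graph (list_set (Tlist P T))) (assoc_graph P) /\
  ((forall i : 'I_n, (exists F, Plv P i F) ->
      forall j, supp (T i) j <-> suppSet (Plv P i) j) ->
   graph_eq (assoc_graph (list_set (Tlist P T))) (assoc_graph P)).
Proof.
move=> Hch HT.
have inT : forall F, list_set (Tlist P T) F <->
   exists i, (exists G, Plv P i G) /\ F = T i.
  move=> F; rewrite /list_set /Tlist in_mapfilter; split.
    by move=> [i [_ [/pbP pi ->]]]; exists i.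
  by move=> [i [pi ->]]; exists i; rewrite mem_enum; split=> //; split=> //; apply/pbP.
have sub : subgraph (assoc_graph (list_set (Tlist P T))) (assoc_graph P).
  split.
    move=> v [F [/inT [i [pi ->]] sv]] /=.
    have [_ H] := HT i pi.
    by have [G [[PG _] sG]] := H v sv; exists G.
  move=> u v /= [uv [F [/inT [i [pi ->]] [su sv]]]].
  have [[si _] H] := HT i pi.
  have [Fi [PFi lvFi]] := pi.
  have Vi : gV (assoc_graph P) i by exists Fi; split=> //; case: lvFi.
  have C : forall w, suppSet (Plv P i) w ->
     w = i \/ (gV (assoc_graph P) w /\ gE (assoc_graph P) w i /\ (w < i)%N).
    move=> w [G [[PG [sGi mG]] sGw]].
    case: (classic (w = i)) => wi; [by left|right].
    split; first by exists G.
    split; first by split=> //; exists G.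
    by rewrite ltn_neqAle mG // andbT; apply/eqP => E; apply: wi; apply: val_inj.
  exact: (Hch i Vi u v (C u (H u su)) (C v (H v sv)) uv).
split.
  split.
    apply/List.Forall_forall => F /inT [i [pi ->]].
    by have [[si _] _] := HT i pi; exists i.
  apply: ordpairs_mapfilter.
    by rewrite -(sorted_map (f := val) (e' := ltn)) val_enum_ord iota_ltn_sorted.
  move=> i j /pbP pi /pbP pj ij; exists i, j.
  by split; [case: (HT i pi)|split; [case: (HT j pj)|]].
split=> // Heq; split=> //; split.
  move=> v [F [PF sv]].
  have [i lvi] := @exists_lv _ _ _ _ sv.
  have pi : exists G, Plv P i G by exists F.
  exists (T i); split; first by apply/inT; exists i.
  by apply/(Heq i pi); exists F.
move=> u v /= [uv [F [PF [su sv]]]].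
have [i lvi] := @exists_lv _ _ _ _ su.
have pi : exists G, Plv P i G by exists F.
split=> //; exists (T i); split; first by apply/inT; exists i.
by split; apply/(Heq i pi); exists F.
Qed.
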